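(* (Transversality Mapping Theorem.) Let $E:\mathbb{R}^{N_x}\to\mathbb{R}$ be twice differentiable, and consider the optimal control problem (R): minimize $y(t_f)$ over state trajectories $(y(\cdot),\boldsymbol x(\cdot),\boldsymbol v(\cdot))$ with unconstrained controls $\boldsymbol u(t)\in\mathbb{R}^{N_x}$ and free final time $t_f$, subject to $\dot{\boldsymbol x}=\boldsymbol v$, $\dot{\boldsymbol v}=\boldsymbol u$, $\dot y=\nabla E(\boldsymbol x)\cdot\boldsymbol v$, $(\boldsymbol x(t_0),t_0)=(\boldsymbol x^0,t^0)$, $y(t_0)=E(\boldsymbol x^0)$, $\boldsymbol v(t_f)=\mathbf 0$, with $t_f$, $\boldsymbol x(t_f)$, $\boldsymbol v(t_0)$ free. Then the first-order necessary condition for the static problem $\min_{\boldsymbol x_f\in\mathbb{R}^{N_x}}E(\boldsymbol x_f)$ is embedded in the terminal transversality condition of (R): along any extremal of (R), the terminal transversality condition $\boldsymbol\lambda_x(t_f)=\mathbf 0$ implies $\nabla E(\boldsymbol x_f)=\mathbf 0$, where $\boldsymbol x_f=\boldsymbol x(t_f)$.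
   Context: The Pontryagin Hamiltonian of (R) is $H=\boldsymbol\lambda_x\cdot\boldsymbol v+\boldsymbol\lambda_v\cdot\boldsymbol u+\lambda_y\,\nabla E(\boldsymbol x)\cdot\boldsymbol v$. An extremal is a state–control trajectory together with costates $(\boldsymbol\lambda_x,\boldsymbol\lambda_v,\lambda_y)$ and a cost multiplier $\nu_0\ge0$, not all multipliers vanishing, satisfying the adjoint equations $\dot{\boldsymbol\lambda}_x=-\lambda_y\nabla^2E(\boldsymbol x)\boldsymbol v$, $\dot{\boldsymbol\lambda}_v=-\boldsymbol\lambda_x-\lambda_y\nabla E(\boldsymbol x)$, $\dot\lambda_y=0$; the transversality conditions $\boldsymbol\lambda_x(t_f)=\mathbf 0$, $\boldsymbol\lambda_v(t_0)=\mathbf 0$, $\lambda_y(t_f)=\nu_0$; and the Hamiltonian minimization condition ($\boldsymbol u(t)$ minimizes $H$ over $\mathbb{R}^{N_x}$, which for this $H$ linear in an unconstrained $\boldsymbol u$ forces $\partial_{\boldsymbol u}H=\boldsymbol\lambda_v(t)=\mathbf 0$ for all $t\in[t_0,t_f]$). *)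

(* Defs.v *)
From HB Require Import structures.
From mathcomp Require Import all_boot all_order all_algebra.
From mathcomp Require Import all_classical all_reals all_analysis.
Set Implicit Arguments. Unset Strict Implicit. Unset Printing Implicit Defensive.
Import Order.TTheory GRing.Theory Num.Theory.
Import numFieldNormedType.Exports.
Local Open Scope ring_scope.

Definition dotv {R : realType} {N : nat} (a b : 'rV[R]_N) : R :=
  \sum_(i < N) a 0 i * b 0 i.

Definition grad {R : realType} {N : nat} (E : 'rV[R]_N -> R) (x : 'rV[R]_N)
  : 'rV[R]_N := \row_(i < N) ('D_(delta_mx 0 i) E x).

(* Hessian-vector product  (nabla^2 E)(x) w  = directional derivative of grad E along w. *)
Definition hessv {R : realType} {N : nat} (E : 'rV[R]_N -> R) (x w : 'rV[R]_N)
  : 'rV[R]_N := 'D_w (grad E) x.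

Definition twice_differentiable {R : realType} {N : nat} (E : 'rV[R]_N -> R) : Prop :=
  forall x, differentiable E x /\ differentiable (grad E) x.

Definition hamiltonian {R : realType} {N : nat} (E : 'rV[R]_N -> R)
  (lx lv : 'rV[R]_N) (ly : R) (x v u : 'rV[R]_N) : R :=
  dotv lx v + dotv lv u + ly * dotv (grad E x) v.

(* Main.v *)
Require Import Defs.
From HB Require Import structures.
From mathcomp Require Import all_boot all_order all_algebra.
From mathcomp Require Import all_classical all_reals all_analysis.
From mathcomp Require Import lra.
Import Order.TTheory GRing.Theory Num.Theory.
Import numFieldNormedType.Exports.
Local Open Scope ring_scope.
Local Open Scope classical_set_scope.

Lemma derive1_zero_on (R : realType) (V : normedModType R) (f : R -> V) (a b t : R) :
  a < b -> a <= t <= b -> (forall s, a <= s <= b -> f s = 0) ->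
  derivable f t 1 -> derive1 f t = 0.
Proof.
move=> ab /andP[hat tb] f0 df.
rewrite derive1E.
have ft : f t = 0 by apply: f0; rewrite hat tb.
have [tltb|tgeb] := ltP t b.
  rewrite /derive (cvg_at_rightE _ _ df).
  apply: (@cvg_lim _ _ _ (at_right _)) => //.
  apply: cvg_trans (cvg_cst (0 : V)).
  apply: near_eq_cvg; near=> h.
  rewrite /= ft subr0 f0 ?scaler0 //.
  have h0 : 0 < h by near: h; exact: nbhs_right_gt.
  have hb : h < b - t by near: h; apply: nbhs_right_lt; rewrite subr_gt0.
  rewrite [_ *: _]mulr1; apply/andP; split; first by rewrite (le_trans hat) // lerDr ltW.
  by rewrite -lerBrDr ltW.
exact: (@at_right_proper_filter (reals_Real__to__Num_NumField R) 0).
have tb' : t = b by apply/eqP; rewrite eq_le tb tgeb.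
rewrite /derive (cvg_at_leftE _ _ df).
apply: (@cvg_lim _ _ _ (at_left _)) => //.
apply: cvg_trans (cvg_cst (0 : V)).
apply: near_eq_cvg; near=> h.
rewrite /= ft subr0 f0 ?scaler0 //.
have h0 : h < 0 by near: h; exact: nbhs_left_lt.
have hb : a - t < h by near: h; apply: nbhs_left_gt; rewrite subr_lt0 tb'.
rewrite [_ *: _]mulr1; apply/andP; split; lra.
exact: (@at_left_proper_filter (reals_Real__to__Num_NumField R) 0).
Unshelve. all: by end_near. Qed.

Lemma mul_self_ge0 (R : realType) (x : R) : 0 <= x * x.
Proof. by rewrite -expr2 sqr_ge0. Qed.

Lemma dotvB (R : realType) (N : nat) (a b c : 'rV[R]_N) :
  dotv a (b - c) = dotv a b - dotv a c.
Proof.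
rewrite /dotv -sumrB; apply: eq_bigr => i _; by rewrite !mxE mulrBr.
Qed.

Lemma dotv_self0 (R : realType) (N : nat) (a : 'rV[R]_N) :
  dotv a a <= 0 -> a = 0.
Proof.
move=> h.
have s0 : \sum_(i < N) a 0 i * a 0 i = 0.
  apply/eqP; rewrite eq_le h /=; apply: sumr_ge0 => i _; exact: mul_self_ge0.
have H := psumr_eq0P (fun i _ => @mul_self_ge0 R (a 0 i)) s0.
apply/rowP => j;  rewrite mxE; apply/eqP; rewrite -[_ == 0]orbb -mulf_eq0; apply/eqP.
exact: H.
Qed.

Lemma const_on (R : realType) (f : R -> R) (a b : R) :
  (forall s, a <= s <= b -> derivable f s 1 /\ derive1 f s = 0) ->
  forall t, a <= t <= b -> f t = f b.
Proof.
move=> H t /andP[ha hb].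
have [tb|] := ltP t b; last first.
  by move=> bt; have -> : t = b by apply/eqP; rewrite eq_le hb bt.
have D : forall s, s \in `]t, b[%R -> is_derive s 1 f ((fun _ => 0 : R) s).
  move=> s hs; move: hs; rewrite in_itv /= => /andP[ts sb].
  have [d1 d2] := H s ltac:(apply/andP; split; lra).
  by apply: DeriveDef => //; rewrite -derive1E.
have C : {within `[t, b], continuous f}.
  apply: derivable_within_continuous => s; rewrite in_itv /= => /andP[ts sb].
  by have [] := H s ltac:(apply/andP; split; lra).
have [c _] := @MVT R f (fun _ => 0) t b tb D C.
by rewrite mul0r => /eqP; rewrite subr_eq0 => /eqP.
Qed.

Theorem theorem2 (R : realType) (N : nat) (E : 'rV[R]_N -> R)
  (x0 : 'rV[R]_N) (t0 tf : R)
  (y : R -> R) (x v u : R -> 'rV[R]_N)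
  (lx lv : R -> 'rV[R]_N) (ly : R -> R) (nu0 : R) :
  twice_differentiable E ->
  t0 < tf ->
  (* state equations of (R) on [t0, tf] *)
  (forall t, t0 <= t <= tf ->
     [/\ derivable x t 1, derivable v t 1 & derivable y t 1] /\
     [/\ derive1 x t = v t, derive1 v t = u t &
         derive1 y t = dotv (grad E (x t)) (v t)]) ->
  (* boundary conditions *)
  x t0 = x0 -> y t0 = E x0 -> v tf = 0 ->
  (* cost multiplier *)
  0 <= nu0 ->
  (* nontriviality of the multipliers *)
  ~ (nu0 = 0 /\ forall t, t0 <= t <= tf ->
       [/\ lx t = 0, lv t = 0 & ly t = 0]) ->
  (* adjoint equations *)
  (forall t, t0 <= t <= tf ->
     [/\ derivable lx t 1, derivable lv t 1 & derivable ly t 1] /\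
     [/\ derive1 lx t = - (ly t *: hessv E (x t) (v t)),
         derive1 lv t = - lx t - ly t *: grad E (x t) &
         derive1 ly t = 0]) ->
  (* transversality conditions *)
  lx tf = 0 -> lv t0 = 0 -> ly tf = nu0 ->
  (* Hamiltonian minimization over unconstrained controls *)
  (forall t, t0 <= t <= tf -> forall w : 'rV[R]_N,
     hamiltonian E (lx t) (lv t) (ly t) (x t) (v t) (u t)
     <= hamiltonian E (lx t) (lv t) (ly t) (x t) (v t) w) ->
  grad E (x tf) = 0.
Proof.
move=> _ ht Hst _ _ _ nu0ge Hnt Hadj lxf lv0 lyf Hmin.
have lvz : forall t, t0 <= t <= tf -> lv t = 0.
  move=> t ht'; apply: dotv_self0.
  have := Hmin t ht' (u t - lv t).
  rewrite /hamiltonian lerD2r lerD2l dotvB => h; lra.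
have lvd : forall t, t0 <= t <= tf -> derive1 lv t = 0.
  move=> t ht'; apply: (@derive1_zero_on _ _ lv t0 tf t) => //.
  by have [[_ ? _] _] := Hadj t ht'.
have lxe : forall t, t0 <= t <= tf -> lx t + ly t *: grad E (x t) = 0.
  move=> t ht'; have [_ [_ e _]] := Hadj t ht'.
  by apply/eqP; rewrite -oppr_eq0 opprD -e lvd.
have lyc : forall t, t0 <= t <= tf -> ly t = nu0.
  move=> t ht'; rewrite -lyf; apply: (@const_on _ ly t0 tf) => // s hs.
  by have [[_ _ ?] [_ _ ?]] := Hadj s hs.
have tff : t0 <= tf <= tf by rewrite lexx andbT ltW.
have := lxe tf tff; rewrite lxf add0r lyc // => /eqP; rewrite scaler_eq0 => /orP[/eqP nu00|/eqP //].
exfalso; apply: Hnt; split=> // t ht'; split; [|exact: lvz|by rewrite lyc].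
by have := lxe t ht'; rewrite lyc // nu00 scale0r addr0.
Qed.
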